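(* Let $H_0$ be an $n$-qubit stabilizer Hamiltonian with a unique ground state $|\mathbf S\rangle$ and spectral gap $\Delta>0$ (difference between the two lowest distinct eigenvalues). Let $V$ be a Hermitian operator on $(\mathbb C^2)^{\otimes n}$ such that $(\mathbb 1-|\mathbf S\rangle\langle\mathbf S|)V|\mathbf S\rangle\neq 0$, and set $H(\lambda)=H_0+\lambda V$. Then there exists $\lambda_0>0$ such that for all $0<|\lambda|<\lambda_0$: (1) $H(\lambda)$ has a unique ground state $|\psi(\lambda)\rangle$, and it is not a stabilizer state; (2) $\delta_{\mathrm{STAB}}(H(\lambda))>0$.
   Context: A stabilizer group $\mathbf S$ is an abelian subgroup of the $n$-qubit Pauli group $\{\pm1,\pm i\}\cdot\{\mathbb 1,X,Y,Z\}^{\otimes n}$ not containing $-\mathbb 1$. A pure stabilizer state is the unique common $+1$ eigenvector of a stabilizer group with $n$ independent generators. A stabilizer Hamiltonian is $H=-\sum_{g\in\mathrm{gen}(\mathbf S)} g$ for a stabilizer group $\mathbf S$ and an independent generating set $\mathrm{gen}(\mathbf S)$ of Hermitian Pauli operators. $\mathrm{STAB}_n$ is the convex hull of all pure stabilizer state projectors. For Hermitian $H$: $E_{\mathrm{STAB}}(H)=\min_{\rho\in\mathrm{STAB}_n}\mathrm{tr}(H\rho)$, $E_{\mathrm{gs}}(H)$ is its smallest eigenvalue, and $\delta_{\mathrm{STAB}}(H)=E_{\mathrm{STAB}}(H)-E_{\mathrm{gs}}(H)$. *)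

(* Defs.v *)
From HB Require Import structures.
From mathcomp Require Import all_boot all_order all_algebra.
From mathcomp Require Import complex.
From mathcomp Require Import reals.
Set Implicit Arguments. Unset Strict Implicit. Unset Printing Implicit Defensive.
Import Order.TTheory GRing.Theory Num.Theory.
Local Open Scope ring_scope.
Local Open Scope complex_scope.

Section Defs.
Variable R : realType.
Local Notation C := R[i].
Variable n : nat.
(* the n-qubit Hilbert space (C^2)^{(x) n} = C^(2^n); basis index i : 'I_(2^n),
   bit k of i (odd (i %/ 2^k)) is the computational-basis value of qubit k *)
Local Notation N := (2 ^ n)%N.
Local Notation Mat := 'M[C]_N.
Local Notation Vec := 'cV[C]_N.

Definition hadj (m p : nat) (A : 'M[C]_(m, p)) : 'M[C]_(p, m) :=
  (map_mx (fun z : C => z^*) A)^T.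

Definition is_hermitian (A : Mat) : Prop := hadj A = A.

Inductive pauli := PI | PX | PY | PZ.

Definition pauli_entry (p : pauli) (a b : bool) : C :=
  match p, a, b with
  | PI, false, false => 1 | PI, true, true => 1
  | PX, false, true => 1 | PX, true, false => 1
  | PY, false, true => - 'i | PY, true, false => 'i
  | PZ, false, false => 1 | PZ, true, true => -1
  | _, _, _ => 0
  end.

(* the tensor product P_0 (x) ... (x) P_{n-1} of single-qubit Paulis *)
Definition pauli_string (P : 'I_n -> pauli) : Mat :=
  \matrix_(i < N, j < N)
    \prod_(k < n) pauli_entry (P k) (odd (i %/ 2 ^ k)) (odd (j %/ 2 ^ k)).

Definition is_pauli (A : Mat) : Prop :=
  exists (c : nat) (P : 'I_n -> pauli), A = ('i ^+ c) *: pauli_string P.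

(* the group generated by g : 'I_m -> Mat (elements of the Pauli group have
   finite order, so the generated group consists of finite products) *)
Definition gen_prod (m : nat) (g : 'I_m -> Mat) (l : seq 'I_m) : Mat :=
  \big[mulmx/1%:M]_(i <- l) g i.

Definition generated (m : nat) (g : 'I_m -> Mat) (A : Mat) : Prop :=
  exists l : seq 'I_m, A = gen_prod g l.

Definition stab_gens (m : nat) (g : 'I_m -> Mat) : Prop :=
  [/\ forall i, is_pauli (g i),
      forall i j, g i *m g j = g j *m g i,
      ~ generated g (- 1%:M) &
      forall i, ~ exists l : seq 'I_m,
          all (fun j => j != i) l /\ g i = gen_prod g l].

Definition stab_hamiltonian (H : Mat) : Prop :=
  exists (m : nat) (g : 'I_m -> Mat),
    stab_gens g /\ (forall i, is_hermitian (g i)) /\ H = - \sum_(i < m) g i.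

Definition stab_state (v : Vec) : Prop :=
  v != 0 /\
  exists g : 'I_n -> Mat, stab_gens g /\ (forall i, g i *m v = v) /\
    forall w : Vec, (forall i, g i *m w = w) -> exists c : C, w = c *: v.

Definition stab_proj (rho : Mat) : Prop :=
  exists v : Vec, stab_state v /\ hadj v *m v = 1%:M /\ rho = v *m hadj v.

Definition in_STAB (rho : Mat) : Prop :=
  exists (k : nat) (p : 'I_k -> R) (rhos : 'I_k -> Mat),
    [/\ forall i, 0 <= p i, \sum_(i < k) p i = 1,
        forall i, stab_proj (rhos i) &
        rho = \sum_(i < k) (p i)%:C *: rhos i].

Definition is_eigval (H : Mat) (a : C) : Prop :=
  exists v : Vec, v != 0 /\ H *m v = a *: v.

Definition is_Egs (H : Mat) (e : R) : Prop :=
  is_eigval H e%:C /\ forall a, is_eigval H a -> e%:C <= a.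

Definition is_ESTAB (H : Mat) (e : R) : Prop :=
  (exists rho, in_STAB rho /\ \tr (H *m rho) = e%:C) /\
  forall rho, in_STAB rho -> e%:C <= \tr (H *m rho).

Definition is_delta_STAB (H : Mat) (d : R) : Prop :=
  exists eS eg : R, is_ESTAB H eS /\ is_Egs H eg /\ d = eS - eg.

Definition spectral_gap (H : Mat) (d : R) : Prop :=
  exists e0 e1 : R, [/\ is_Egs H e0, is_eigval H e1%:C, e0 < e1,
    (forall a, is_eigval H a -> a != e0%:C -> e1%:C <= a) & d = e1 - e0].

Definition ground_state (H : Mat) (v : Vec) : Prop :=
  v != 0 /\ exists e : R, is_Egs H e /\ H *m v = e%:C *: v.

Definition unique_ground_state (H : Mat) (v : Vec) : Prop :=
  ground_state H v /\ forall w, ground_state H w -> exists c : C, w = c *: v.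

End Defs.

(* Main.v *)
Require Import Defs.
From HB Require Import structures.
From mathcomp Require Import all_boot all_order all_algebra.
From mathcomp Require Import complex.
From mathcomp Require Import reals.
From mathcomp Require Import spectral sesquilinear.
From mathcomp Require Import ring lra.
From Stdlib Require Import Classical.
Import Order.TTheory GRing.Theory Num.Theory.
Local Open Scope ring_scope.
Local Open Scope complex_scope.
Set Implicit Arguments. Unset Strict Implicit. Unset Printing Implicit Defensive.

Section Basics.
Variable R : realType.
Local Notation C := R[i].

Definition sq (z : C) : R := complex.Re z ^+ 2 + complex.Im z ^+ 2.

Lemma conj_mul_sq (z : C) : z^* * z = (sq z)%:C.
Proof. case: z => a b; rewrite /sq /=; simpc; rewrite /= !expr2; congr (_ +i* _); ring. Qed.

Lemma sq_ge0 z : 0 <= sq z.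
Proof. by rewrite /sq addr_ge0 // sqr_ge0. Qed.

Lemma sq_eq0 z : sq z = 0 -> z = 0.
Proof.
case: z => a b; rewrite /sq /= => H.
have Ha : a ^+ 2 = 0.
  apply/eqP; rewrite eq_le sqr_ge0 andbT -H lerDl sqr_ge0 //.
have Hb : b ^+ 2 = 0 by move: H; rewrite Ha add0r.
by move/eqP: Ha; rewrite sqrf_eq0 => /eqP ->; move/eqP: Hb; rewrite sqrf_eq0 => /eqP ->.
Qed.

Lemma sqM x y : sq (x * y) = sq x * sq y.
Proof. case: x => a b; case: y => c d; rewrite /sq /=; ring. Qed.

Lemma sq_real (x : R) : sq x%:C = x ^+ 2.
Proof. by rewrite /sq /= expr0n /= addr0. Qed.

Lemma conj_real (x : R) : (x%:C)^* = x%:C.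
Proof. by rewrite /= oppr0. Qed.

Lemma real_eq_conj (z : C) : z^* = z -> z = (complex.Re z)%:C.
Proof. case: z => a b /= [] Hb; congr (_ +i* _). 
have : b + b = 0 by rewrite -{1}Hb addNr. 
by rewrite -mulr2n -mulr_natr => /eqP; rewrite mulf_eq0 pnatr_eq0 orbF => /eqP.
Qed.

Lemma ReM_real (x : R) (z : C) : complex.Re (x%:C * z) = x * complex.Re z.
Proof. by case: z => a b /=; rewrite mul0r subr0. Qed.

Lemma Re_real (x : R) : complex.Re x%:C = x. Proof. by []. Qed.

Lemma hadjE m p (A : 'M[C]_(m, p)) i j : hadj A i j = (A j i)^*.
Proof. by rewrite /hadj !mxE. Qed.

Lemma hadjK m p (A : 'M[C]_(m, p)) : hadj (hadj A) = A.
Proof. by apply/matrixP => i j; rewrite !hadjE conjcK. Qed.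

Lemma hadjM m p q (A : 'M[C]_(m, p)) (B : 'M[C]_(p, q)) :
  hadj (A *m B) = hadj B *m hadj A.
Proof.
apply/matrixP => i j; rewrite hadjE !mxE rmorph_sum /=.
by apply: eq_bigr => k _; rewrite !hadjE rmorphM mulrC.
Qed.

Lemma hadjD m p (A B : 'M[C]_(m, p)) : hadj (A + B) = hadj A + hadj B.
Proof. by apply/matrixP => i j; rewrite !hadjE !mxE rmorphD. Qed.

Lemma hadjN m p (A : 'M[C]_(m, p)) : hadj (- A) = - hadj A.
Proof. by apply/matrixP => i j; rewrite !hadjE !mxE rmorphN. Qed.

Lemma hadjB m p (A B : 'M[C]_(m, p)) : hadj (A - B) = hadj A - hadj B.
Proof. by rewrite hadjD hadjN. Qed.

Lemma hadjZ m p (a : C) (A : 'M[C]_(m, p)) : hadj (a *: A) = a^* *: hadj A.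
Proof. by apply/matrixP => i j; rewrite !hadjE !mxE rmorphM. Qed.

Lemma hadj1 m : hadj (1%:M : 'M[C]_m) = 1%:M.
Proof.
apply/matrixP => i j; rewrite !hadjE !mxE eq_sym.
by rewrite rmorph_nat.
Qed.

Lemma hadj_delta m p (i : 'I_m) (j : 'I_p) : hadj (delta_mx i j : 'M[C]_(m,p)) = delta_mx j i.
Proof.
apply/matrixP => a b; rewrite !hadjE !mxE.
by rewrite rmorph_nat andbC.
Qed.

Lemma hadj_diag m (r : 'I_m -> R) :
  hadj (diag_mx (\row_k (r k)%:C)) = diag_mx (\row_k (r k)%:C).
Proof.
apply/matrixP => a b; rewrite !hadjE !mxE eq_sym.
rewrite rmorphMn; case: (eqVneq a b) => [->|nab].
  by rewrite !mulr1n; exact: conj_real.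
by rewrite !mulr0n.
Qed.

Lemma hadj_tmx m p (A : 'M[C]_(m,p)) : hadj A = map_mx Num.conj (A ^T).
Proof. by rewrite /hadj map_trmx. Qed.

Lemma spectral_herm m (H : 'M[C]_m) : hadj H = H ->
  exists (U : 'M[C]_m) (r : 'I_m -> R),
    [/\ hadj U *m U = 1%:M, U *m hadj U = 1%:M &
        H = hadj U *m diag_mx (\row_k (r k)%:C) *m U].
Proof.
move=> hH.
have nH : H \is normalmx.
  apply/normalmxP; rewrite -hadj_tmx hH //.
have /orthomx_spectralP HE := nH.
set P := spectralmx H in HE; set d := spectral_diag H in HE.
have Pu : P \is unitarymx by exact: spectral_unitarymx.
have PP : P *m hadj P = 1%:M by rewrite hadj_tmx; apply/unitarymxP.
have PP' : hadj P *m P = 1%:M by apply: mulmx1C.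
rewrite invmx_unitary // -hadj_tmx in HE.
have DE : diag_mx d = P *m H *m hadj P.
  by rewrite HE !mulmxA PP mul1mx -mulmxA PP mulmx1.
have Dh : hadj (diag_mx d) = diag_mx d.
  by rewrite DE !hadjM hadjK hH mulmxA.
exists P, (fun k => complex.Re (d 0 k)); split => //.
rewrite HE; congr (_ *m _ *m _); apply/matrixP => a b; rewrite !mxE.
case: eqP => [->|_]; rewrite ?mulr1n ?mulr0n //.
apply: real_eq_conj.
have := congr1 (fun M : 'M[C]_m => M b b) Dh; rewrite /= hadjE !mxE eqxx !mulr1n.
by [].
Qed.

End Basics.

Section Herm.
Variable R : realType.
Local Notation C := R[i].
Variable n : nat.
Local Notation N := (2 ^ n)%N.
Local Notation Mat := 'M[C]_N.
Local Notation Vec := 'cV[C]_N.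

Definition Q (H : Mat) (w : Vec) : C := (hadj w *m H *m w) 0 0.
Definition dotv (u w : Vec) : C := (hadj u *m w) 0 0.
Definition q (H : Mat) (w : Vec) : R := complex.Re (Q H w).
Definition nn (w : Vec) : R := complex.Re (dotv w w).
Definition bv (k : 'I_N) : Vec := delta_mx k 0.

Lemma N_gt0 : (0 < N)%N. Proof. by rewrite expn_gt0. Qed.

Lemma dotv_sq (x : Vec) : dotv x x = (\sum_k sq (x k 0))%:C.
Proof.
rewrite /dotv !mxE rmorph_sum; apply: eq_bigr => k _.
by rewrite hadjE conj_mul_sq.
Qed.

Lemma nn_sq (x : Vec) : nn x = \sum_k sq (x k 0).
Proof. by rewrite /nn dotv_sq. Qed.

Lemma nn_ge0 x : 0 <= nn x.
Proof. by rewrite nn_sq sumr_ge0 // => k _; apply: sq_ge0. Qed.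

Lemma nn_eq0 x : nn x = 0 -> x = 0.
Proof.
rewrite nn_sq => /eqP; rewrite psumr_eq0 => [/allP Hall|k _]; last exact: sq_ge0.
apply/matrixP => i j; rewrite ord1 !mxE; apply: sq_eq0; apply/eqP.
by apply: Hall; rewrite mem_index_enum.
Qed.

Lemma nn_gt0 x : x != 0 -> 0 < nn x.
Proof. by move=> nx; rewrite lt_def nn_ge0 andbT; apply/eqP => /nn_eq0 /eqP; apply/negP. Qed.

Lemma dotv_nn x : dotv x x = (nn x)%:C.
Proof. by rewrite dotv_sq nn_sq. Qed.

Definition diagr (r : 'I_N -> R) : Mat := diag_mx (\row_k (r k)%:C).

Lemma Q_diag (r : 'I_N -> R) (x : Vec) :
  Q (diagr r) x = (\sum_k r k * sq (x k 0))%:C.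
Proof.
rewrite /Q mul_mx_diag !mxE rmorph_sum; apply: eq_bigr => k _.
rewrite !mxE rmorphM /= -conj_mul_sq; ring.
Qed.

Record spec_data (H : Mat) (U : Mat) (r : 'I_N -> R) : Prop := SpecData {
  sUU : hadj U *m U = 1%:M;
  sUU' : U *m hadj U = 1%:M;
  sH : H = hadj U *m diagr r *m U }.

Lemma spec_exists (H : Mat) : hadj H = H -> exists U r, spec_data H U r.
Proof.
by move=> /spectral_herm [U [r [h1 h2 h3]]]; exists U, r; split.
Qed.

Section WithSpec.
Variables (H U : Mat) (r : 'I_N -> R).
Hypothesis sd : spec_data H U r.

Lemma Q_spec w : Q H w = (\sum_k r k * sq ((U *m w) k 0))%:C.
Proof.
rewrite -Q_diag /Q (sH sd) hadjM !mulmxA.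
by rewrite -!mulmxA.
Qed.

Lemma dotv_spec w : dotv w w = dotv (U *m w) (U *m w).
Proof. by rewrite /dotv hadjM -mulmxA (mulmxA (hadj U)) (sUU sd) mul1mx. Qed.

Lemma nn_spec w : nn w = \sum_k sq ((U *m w) k 0).
Proof. by rewrite /nn dotv_spec dotv_sq. Qed.

Lemma q_spec w : q H w = \sum_k r k * sq ((U *m w) k 0).
Proof. by rewrite /q Q_spec. Qed.

Lemma Q_real w : Q H w = (q H w)%:C.
Proof. by rewrite q_spec Q_spec. Qed.

Lemma diagr_mul (x : Vec) k : (diagr r *m x) k 0 = (r k)%:C * x k 0.
Proof. by rewrite mul_diag_mx !mxE. Qed.

Lemma eig_spec (v : Vec) a :
  H *m v = a *: v <-> forall k, (r k)%:C * (U *m v) k 0 = a * (U *m v) k 0.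
Proof.
split.
  move=> Hv k; rewrite -diagr_mul.
  have -> : diagr r *m (U *m v) = U *m (H *m v).
    by rewrite (sH sd) !mulmxA (sUU' sd) mul1mx.
  by rewrite Hv -scalemxAr mxE.
move=> Hk.
have E : diagr r *m (U *m v) = a *: (U *m v).
  by apply/matrixP => i j; rewrite ord1 diagr_mul Hk [RHS]mxE.
rewrite (sH sd) -!mulmxA E -scalemxAr mulmxA (sUU sd) mul1mx //.
Qed.

Lemma Ubv k : U *m (hadj U *m bv k) = bv k.
Proof. by rewrite mulmxA (sUU' sd) mul1mx. Qed.

Lemma bv_neq0 k : bv k != 0.
Proof. by apply/eqP => /matrixP /(_ k 0); rewrite !mxE !eqxx /= => /eqP; rewrite oner_eq0. Qed.

Lemma r_eig k : H *m (hadj U *m bv k) = (r k)%:C *: (hadj U *m bv k).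
Proof.
apply/eig_spec => j; rewrite Ubv !mxE.
by case: (eqVneq j k) => [->|njk] //; rewrite /= !mulr0n !mulr0.
Qed.

Lemma r_eigvec_neq0 k : hadj U *m bv k != 0.
Proof. by apply/eqP => E; move: (Ubv k); rewrite E mulmx0 => /esym /eqP; apply/negP/bv_neq0. Qed.

Lemma r_eigval k : is_eigval H (r k)%:C.
Proof. by exists (hadj U *m bv k); split; [exact: r_eigvec_neq0 | exact: r_eig]. Qed.

Lemma eigval_r a : is_eigval H a -> exists k, a = (r k)%:C.
Proof.
move=> [v [nv /eig_spec Hv]].
have nx : U *m v != 0.
  apply/eqP => E; move/eqP: nv; apply.
  by rewrite -[v]mul1mx -(sUU sd) -mulmxA E mulmx0.
have [k xk] : exists k, (U *m v) k 0 != 0.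
  apply/existsP; apply: contraR nx => /existsPn Hx.
  by apply/eqP/matrixP => i j; rewrite ord1; move: (Hx i); rewrite negbK => /eqP ->; rewrite mxE.
by exists k; apply/esym/(mulIf xk)/Hv.
Qed.

Lemma Egs_exists : exists e, is_Egs H e.
Proof.
case: (@arg_minP _ _ _ (Ordinal N_gt0) xpredT r) => // k _ Hk.
exists (r k); split; first exact: r_eigval.
move=> a /eigval_r [j ->]; rewrite lecR; exact: Hk.
Qed.

Lemma Egs_le e k : is_Egs H e -> e <= r k.
Proof. by move=> [_ He]; rewrite -lecR; apply: He; apply: r_eigval. Qed.

Lemma rayleigh e w : is_Egs H e -> e * nn w <= q H w.
Proof.
move=> He; rewrite q_spec nn_spec mulr_sumr; apply: ler_sum => k _.
by apply: ler_wpM2r; [exact: sq_ge0 | exact: Egs_le].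
Qed.

Lemma rayleigh_eq e w : is_Egs H e -> q H w = e * nn w -> H *m w = e%:C *: w.
Proof.
move=> He; rewrite q_spec nn_spec mulr_sumr => /eqP; rewrite -subr_eq0 -sumrB.
move=> /eqP /psumr_eq0P H0.
have {}H0 := H0 (fun i _ => ltac:(rewrite -mulrBl mulr_ge0 ?sq_ge0 // subr_ge0; exact: Egs_le)).
apply/eig_spec => k.
have := H0 k isT; rewrite -mulrBl => /eqP; rewrite mulf_eq0 => /orP [].
  by rewrite subr_eq0 => /eqP ->.
by move=> /eqP /sq_eq0 ->; rewrite !mulr0.
Qed.

End WithSpec.

Lemma Egs_unique (H : Mat) e e' : is_Egs H e -> is_Egs H e' -> e = e'.
Proof.
move=> [h1 h2] [h1' h2']; apply/eqP; rewrite eq_le -!lecR.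
by rewrite h2 // h2'.
Qed.

End Herm.
Arguments bv {R n} k.

Section Herm2.
Variable R : realType.
Local Notation C := R[i].
Variable n : nat.
Local Notation N := (2 ^ n)%N.
Local Notation Mat := 'M[C]_N.
Local Notation Vec := 'cV[C]_N.

Lemma dotvDr (x y z : Vec) : dotv x (y + z) = dotv x y + dotv x z.
Proof. by rewrite /dotv mulmxDr mxE. Qed.
Lemma dotvDl (x y z : Vec) : dotv (x + y) z = dotv x z + dotv y z.
Proof. by rewrite /dotv hadjD mulmxDl mxE. Qed.
Lemma dotvZr (x y : Vec) a : dotv x (a *: y) = a * dotv x y.
Proof. by rewrite /dotv -scalemxAr mxE. Qed.
Lemma dotvZl (x y : Vec) a : dotv (a *: x) y = a^* * dotv x y.
Proof. by rewrite /dotv hadjZ -scalemxAl mxE. Qed.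
Lemma dotvC (x y : Vec) : dotv y x = (dotv x y)^*.
Proof.
rewrite /dotv -[in RHS]hadjE hadjM hadjK.
by [].
Qed.
Lemma dotv_mul (H : Mat) (x y : Vec) : dotv x (H *m y) = dotv (hadj H *m x) y.
Proof. by rewrite /dotv hadjM hadjK mulmxA. Qed.
Lemma Q_dotv (H : Mat) w : Q H w = dotv w (H *m w).
Proof. by rewrite /Q /dotv mulmxA. Qed.

Lemma q_lin (H0 V : Mat) (lam : R) w : q (H0 + lam%:C *: V) w = q H0 w + lam * q V w.
Proof.
rewrite /q !Q_dotv mulmxDl dotvDr -scalemxAl dotvZr.
by rewrite raddfD /= ReM_real.
Qed.

Lemma qN (V : Mat) w : q (- V) w = - q V w.
Proof. by rewrite /q !Q_dotv mulNmx /dotv mulmxN mxE raddfN. Qed.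

Lemma q_eig (H : Mat) (z : Vec) (e : R) : H *m z = e%:C *: z -> q H z = e * nn z.
Proof. by move=> Hz; rewrite /q Q_dotv Hz dotvZr /nn ReM_real. Qed.

Lemma herm_any_spec (H : Mat) : hadj H = H -> forall e w, is_Egs H e -> e * nn w <= q H w.
Proof. by move=> hH e w He; have [U [r sd]] := spec_exists hH; apply: rayleigh sd _ _ He. Qed.

Lemma herm_eq_spec (H : Mat) : hadj H = H -> forall e w, is_Egs H e -> q H w = e * nn w -> H *m w = e%:C *: w.
Proof. by move=> hH e w He; have [U [r sd]] := spec_exists hH; apply: rayleigh_eq sd _ _ He. Qed.

Lemma herm_Egs (H : Mat) : hadj H = H -> exists e, is_Egs H e.
Proof. by move=> hH; have [U [r sd]] := spec_exists hH; apply: Egs_exists sd. Qed.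

Lemma qV_bound (V : Mat) : hadj V = V -> exists K, 0 <= K /\ forall w, `|q V w| <= K * nn w.
Proof.
move=> hV.
have hV' : hadj (- V) = - V by rewrite hadjN hV.
have [a1 H1] := herm_Egs hV; have [a2 H2] := herm_Egs hV'.
exists (`|a1| + `|a2|); split; first by rewrite addr_ge0.
move=> w; have h1 := herm_any_spec hV w H1; have h2 := herm_any_spec hV' w H2.
rewrite qN in h2; have h0 := nn_ge0 w.
have b1 : - `|a1| <= a1 by rewrite lerNl ler_normr lexx orbT.
have b2 : - `|a2| <= a2 by rewrite lerNl ler_normr lexx orbT.
have c1 : 0 <= `|a1| by []. have c2 : 0 <= `|a2| by [].
rewrite ler_norml; apply/andP; split; nra.
Qed.

Lemma gap_bound (H : Mat) (S : Vec) e0 e1 w : hadj H = H -> is_Egs H e0 ->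
  (forall a, is_eigval H a -> a != e0%:C -> e1%:C <= a) ->
  unique_ground_state H S -> dotv S w = 0 -> e1 * nn w <= q H w.
Proof.
move=> hH He0 Hgap [_ Huniq] Sw.
have [U [r sd]] := spec_exists hH.
rewrite (q_spec sd) (nn_spec sd) mulr_sumr; apply: ler_sum => k _.
case: (eqVneq (r k) e0) => [rk|rk].
  have gs : ground_state H (hadj U *m bv k).
    split; first exact: (r_eigvec_neq0 sd).
    by exists e0; split => //; rewrite -rk; apply: (r_eig sd).
  have [c cE] := Huniq _ gs.
  have : (U *m w) k 0 = 0.
    have -> : (U *m w) k 0 = dotv (hadj U *m bv k) w.
      by rewrite /dotv hadjM hadjK hadj_delta -mulmxA -rowE [RHS]mxE.
    by rewrite cE dotvZl Sw mulr0.
  by move=> ->; rewrite /sq /= expr0n /= addr0 !mulr0.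
apply: ler_wpM2r; first exact: sq_ge0.
rewrite -lecR; apply: Hgap; first exact: (r_eigval sd).
by apply: contra rk => /eqP [] ->.
Qed.

Lemma decomp (H : Mat) (S w : Vec) e0 : hadj H = H -> H *m S = e0%:C *: S -> dotv S S = 1 ->
  [/\ dotv S (w - dotv S w *: S) = 0,
      nn w = sq (dotv S w) + nn (w - dotv S w *: S) &
      q H w = e0 * sq (dotv S w) + q H (w - dotv S w *: S)].
Proof.
move=> hH HS SS.
set a := dotv S w; set u := w - a *: S.
have wE : w = u + a *: S by rewrite /u subrK.
have Su : dotv S u = 0 by rewrite /u dotvDr -scaleN1r dotvZr dotvZr SS; rewrite /a; ring.
have uS : dotv u S = 0 by rewrite dotvC Su conjc0.
clearbody u.
split => //.
  rewrite {1}wE /nn dotvDl !dotvDr !dotvZr !dotvZl uS Su SS !mulr0 !addr0 add0r mulr1.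
  by rewrite [a * _]mulrC conj_mul_sq raddfD /= addrC.
rewrite /q !Q_dotv {1 2}wE mulmxDr -scalemxAr HS dotvDl !dotvDr !dotvZr !dotvZl.
rewrite (dotv_mul H S u) hH HS dotvZl Su uS SS !mulr0 !addr0 mulr1 add0r.
by rewrite mulrCA [a * _]mulrC conj_mul_sq -rmorphM raddfD /= addrC.
Qed.

End Herm2.

Section Key.
Variable R : realType.
Local Notation C := R[i].
Variable n : nat.
Local Notation N := (2 ^ n)%N.
Local Notation Mat := 'M[C]_N.
Local Notation Vec := 'cV[C]_N.

Lemma herm_pert (H0 V : Mat) (lam : R) : hadj H0 = H0 -> hadj V = V ->
  hadj (H0 + lam%:C *: V) = H0 + lam%:C *: V.
Proof. move=> h0 hv; rewrite hadjD hadjZ h0 hv; congr (_ + _ *: _); exact: (conj_real lam). Qed.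

Lemma nn_one (S : Vec) : dotv S S = 1 -> nn S = 1.
Proof. by rewrite /nn => ->. Qed.

Lemma key (H0 V : Mat) (S : Vec) e0 e1 K c (lam e : R) (z : Vec) :
  hadj H0 = H0 -> hadj V = V -> H0 *m S = e0%:C *: S -> dotv S S = 1 ->
  (forall u, dotv S u = 0 -> e1 * nn u <= q H0 u) ->
  0 <= K -> (forall w, `|q V w| <= K * nn w) ->
  e0 < e1 -> 2 * (`|lam| * K) < (e1 - e0) * (1 - c) ->
  is_Egs (H0 + lam%:C *: V) e -> z != 0 -> (H0 + lam%:C *: V) *m z = e%:C *: z ->
  c * nn z < sq (dotv S z).
Proof.
move=> h0 hv HS SS Hgap K0 HK e01 Hlam He nz Hz.
have hH := herm_pert lam h0 hv.
have nS := nn_one SS.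
have eS := herm_any_spec hH S He.
rewrite q_lin (q_eig HS) nS mulr1 in eS.
have LV : forall w, - (`|lam| * K * nn w) <= lam * q V w.
  move=> w; have : `|lam * q V w| <= `|lam| * K * nn w.
    by rewrite normrM -mulrA ler_wpM2l.
  by rewrite ler_norml => /andP [].
have LV' : forall w, lam * q V w <= `|lam| * K * nn w.
  move=> w; have : `|lam * q V w| <= `|lam| * K * nn w.
    by rewrite normrM -mulrA ler_wpM2l.
  by rewrite ler_norml => /andP [].
have [Su nnz qz] := decomp z h0 HS SS.
set a := dotv S z in Su nnz qz *; set u := z - a *: S in Su nnz qz *.
have gu := Hgap _ Su.
have ez := q_eig Hz; rewrite q_lin qz in ez.
have nz0 := nn_gt0 nz.
have nu0 := nn_ge0 u.
have sa0 := sq_ge0 a.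
have LS := LV' S; rewrite nS mulr1 in LS.
have Lz := LV z.
set L := `|lam| * K in Hlam LS Lz eS.
have L0 : 0 <= L by rewrite mulr_ge0.
have F1 : e * nn z <= (e0 + L) * nn z by apply: ler_wpM2r; [exact: ltW | lra].
have F : (e1 - e0) * nn u <= 2 * L * nn z by nra.
have G : 2 * L * nn z < (e1 - e0) * ((1 - c) * nn z).
  by rewrite [X in _ < X]mulrA (ltr_pM2r nz0).
have Hu : nn u < (1 - c) * nn z.
  by rewrite -(ltr_pM2l (x := e1 - e0)) ?subr_gt0 //; apply: le_lt_trans G.
lra.
Qed.

End Key.

Lemma finite_choice (T : finType) (X : eqType) (P : T -> X -> Prop) :
  exists L : seq X, (forall x, x \in L -> exists t, P t x) /\
    (forall t, (exists x, P t x) -> exists2 x, x \in L & P t x).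
Proof.
suff H : forall s : seq T, exists L : seq X, (forall x, x \in L -> exists t, P t x) /\
    (forall t, t \in s -> (exists x, P t x) -> exists2 x, x \in L & P t x).
  have [L [H1 H2]] := H (enum T); exists L; split => // t; apply: H2; by rewrite mem_enum.
elim => [|t s [L [H1 H2]]]; first by exists [::]; split.
case: (classic (exists x, P t x)) => [[x Px]|nP].
  exists (x :: L); split.
    by move=> y; rewrite in_cons => /orP [/eqP ->|/H1]; [exists t|].
  move=> t'; rewrite in_cons => /orP [/eqP -> _|/H2 h /h [y yL Py]].
    by exists x; rewrite ?mem_head.
  by exists y; rewrite // in_cons yL orbT.
exists L; split => // t'; rewrite in_cons => /orP [/eqP -> ex|/H2 //].
by exfalso; apply: nP.
Qed.

Section Stab.
Variable R : realType.
Local Notation C := R[i].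
Variable n : nat.
Local Notation N := (2 ^ n)%N.
Local Notation Mat := 'M[C]_N.
Local Notation Vec := 'cV[C]_N.

Definition pauli_of (k : 'I_4) : pauli :=
  match nat_of_ord k with 0 => PI | 1 => PX | 2 => PY | _ => PZ end%N.
Definition ord_of (p : pauli) : 'I_4 :=
  match p with PI => inord 0 | PX => inord 1 | PY => inord 2 | PZ => inord 3 end.
Lemma ord_ofK p : pauli_of (ord_of p) = p.
Proof. by case: p; rewrite /pauli_of /ord_of inordK. Qed.

Lemma pauli_string_ext (f g : 'I_n -> pauli) : f =1 g ->
  pauli_string R f = pauli_string R g.
Proof.
move=> fg; apply/matrixP => i j; rewrite !mxE; apply: eq_bigr => k _; by rewrite fg.
Qed.

Definition pmat (c : 'I_4) (P : {ffun 'I_n -> 'I_4}) : Mat :=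
  'i ^+ c *: pauli_string R (fun k => pauli_of (P k)).

Lemma i4 (c : nat) : ('i : C) ^+ c = 'i ^+ (c %% 4).
Proof.
rewrite {1}(divn_eq c 4) exprD mulnC exprM.
have -> : ('i : C) ^+ 4 = 1 by rewrite (exprM _ 2 2) sqr_i; rewrite expr2 mulrNN mulr1.
by rewrite expr1n mul1r.
Qed.

Lemma is_pauli_code (A : Mat) : is_pauli A -> exists c P, A = pmat c P.
Proof.
move=> [c [P ->]]; exists (inord (c %% 4)), [ffun k => ord_of (P k)].
rewrite /pmat inordK ?ltn_pmod // -i4; congr (_ *: _).
by apply: pauli_string_ext => k; rewrite ffunE ord_ofK.
Qed.

Definition code := {ffun 'I_n -> 'I_4 * {ffun 'I_n -> 'I_4}}.
Definition gen (t : code) (i : 'I_n) : Mat := pmat (t i).1 (t i).2.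

Lemma gens_code (g : 'I_n -> Mat) : (forall i, is_pauli (g i)) ->
  exists t : code, forall i, g i = gen t i.
Proof.
move=> Hg.
have [f Hf] : exists f : 'I_n -> 'I_4 * {ffun 'I_n -> 'I_4}, forall i, g i = pmat (f i).1 (f i).2.
  have := @fin_all_exists _ (fun _ => ('I_4 * {ffun 'I_n -> 'I_4})%type)
     (fun i u => g i = pmat u.1 u.2).
  apply => i.
  by have [c [P E]] := is_pauli_code (Hg i); exists (c, P).
by exists [ffun i => f i] => i; rewrite /gen ffunE.
Qed.

Definition code_state (t : code) (v : Vec) : Prop :=
  v != 0 /\ (forall i, gen t i *m v = v) /\
  forall w : Vec, (forall i, gen t i *m w = w) -> exists c : C, w = c *: v.

Lemma stab_state_code (v : Vec) : stab_state v -> exists t, code_state t v.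
Proof.
move=> [nv [g [[Hp _ _ _] [Hf Hu]]]].
have [t Ht] := gens_code Hp.
exists t; split => //; split.
  by move=> i; rewrite -Ht.
by move=> w Hw; apply: Hu => i; rewrite Ht.
Qed.

Lemma code_line t v w : code_state t v -> code_state t w -> exists c, w = c *: v.
Proof. by move=> [_ [_ Hu]] [_ [Hw _]]; apply: Hu. Qed.

Lemma stab_state_scale (v : Vec) b : stab_state v -> b != 0 -> stab_state (b *: v).
Proof.
move=> [nv [g [Hg [Hf Hu]]]] nb; split; first by rewrite scaler_eq0 negb_or nb.
exists g; split => //; split; first by move=> i; rewrite -scalemxAr Hf.
move=> w /Hu [c ->]; exists (c / b); by rewrite scalerA divfK.
Qed.

Lemma dotv_1 (v : Vec) : (hadj v *m v = 1%:M) <-> dotv v v = 1.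
Proof.
split; first by rewrite /dotv => ->; rewrite mxE.
by move=> h; apply/matrixP => i j; rewrite !ord1 /dotv in h *; rewrite h mxE.
Qed.

Lemma nnZ (v : Vec) b : nn (b *: v) = sq b * nn v.
Proof. by rewrite /nn dotvZl dotvZr mulrA conj_mul_sq dotv_nn -rmorphM. Qed.

Lemma dotvZ_sq (S v : Vec) b : sq (dotv S (b *: v)) = sq b * sq (dotv S v).
Proof. by rewrite dotvZr sqM. Qed.

Lemma strict_cs (S v : Vec) : dotv S S = 1 -> v != 0 -> ~ (exists b, v = b *: S) ->
  sq (dotv S v) < nn v.
Proof.
move=> SS nv nprop.
have h1 : hadj (1%:M : Mat) = 1%:M by rewrite hadj1.
have h2 : (1%:M : Mat) *m S = (1 : R)%:C *: S by rewrite mul1mx scale1r.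
have [_ E _] := decomp v h1 h2 SS.
rewrite E ltrDl; apply: nn_gt0; apply/eqP => u0; apply: nprop.
by exists (dotv S v); apply/eqP; rewrite -subr_eq0 u0.
Qed.

Lemma list_max (S : Vec) (L : seq Vec) : (forall v, v \in L -> v != 0 /\ sq (dotv S v) < nn v) ->
  exists c, [/\ 0 <= c, c < 1 & forall v, v \in L -> sq (dotv S v) <= c * nn v].
Proof.
elim: L => [|v L IH] H; first by exists 0; split => //; rewrite ltr01.
have [c [c0 c1 Hc]] := IH (fun x xL => H x (ltac:(by rewrite in_cons xL orbT))).
have [nv lt] := H v (mem_head _ _).
have np := nn_gt0 nv.
set rho := sq (dotv S v) / nn v.
have r0 : 0 <= rho by rewrite divr_ge0 ?sq_ge0 ?nn_ge0.
have r1 : rho < 1 by rewrite ltr_pdivrMr // mul1r.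
exists (Num.max c rho); split.
- by rewrite le_max c0.
- by rewrite gt_max c1.
move=> x; rewrite in_cons => /orP [/eqP ->|xL].
  apply: (le_trans (y := rho * nn v)); first by rewrite /rho divfK // gt_eqF.
  by apply: ler_wpM2r; [exact: nn_ge0 | rewrite le_max lexx orbT].
apply: (le_trans (Hc x xL)); apply: ler_wpM2r; [exact: nn_ge0 | by rewrite le_max lexx].
Qed.

Lemma fid_bound (S : Vec) : dotv S S = 1 -> exists c, [/\ 0 <= c, c < 1 &
  forall v, stab_state v -> ~ (exists b, v = b *: S) -> sq (dotv S v) <= c * nn v].
Proof.
move=> SS.
have [L [H1 H2]] := finite_choice (fun (t : code) v => code_state t v /\ ~ (exists b, v = b *: S)).
have [c [c0 c1 Hc]] : exists c, [/\ 0 <= c, c < 1 & forall v, v \in L -> sq (dotv S v) <= c * nn v].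
  apply: list_max => v /H1 [t [[nv _] np]]; split => //; exact: strict_cs.
exists c; split => // v sv np.
have [t ct] := stab_state_code sv.
have [v' v'L [ct' np']] := H2 t (ex_intro _ v (conj ct np)).
have [b ->] := code_line ct' ct.
rewrite dotvZ_sq nnZ mulrCA; apply: ler_wpM2l; [exact: sq_ge0 | exact: Hc].
Qed.

Lemma proj_list : exists L : seq Mat, (forall rho, rho \in L -> stab_proj rho) /\
  (forall rho, stab_proj rho -> rho \in L).
Proof.
have [L [H1 H2]] := finite_choice (fun (t : code) rho =>
  stab_proj rho /\ exists v, [/\ code_state t v, dotv v v = 1 & rho = v *m hadj v]).
exists L; split; first by move=> rho /H1 [t []].
move=> rho sp; have [v [sv [v1 ->]]] := sp.
have [t ct] := stab_state_code sv.
have ex : exists rho0, stab_proj rho0 /\ exists v0, [/\ code_state t v0, dotv v0 v0 = 1 & rho0 = v0 *m hadj v0].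
  by exists (v *m hadj v); split => //; exists v; split => //; apply/dotv_1.
have [rho' rL [_ [v' [ct' v1' E']]]] := H2 t ex.
rewrite E' in rL.
have [b bE] := code_line ct' ct.
move/dotv_1: v1; rewrite bE dotvZl dotvZr v1' mulr1 conj_mul_sq => sb.
rewrite hadjZ -scalemxAl -scalemxAr scalerA [b * _]mulrC conj_mul_sq sb.
by rewrite scale1r.
Qed.

End Stab.

Section Bits.
Local Open Scope nat_scope.
Lemma bits_eq (m a b : nat) : (a < 2 ^ m)%N -> (b < 2 ^ m)%N ->
  (forall k, (k < m)%N -> odd (a %/ 2 ^ k) = odd (b %/ 2 ^ k)) -> a = b.
Proof.
elim: m a b => [|m IH] a b.
  by rewrite expn0 !ltnS !leqn0 => /eqP -> /eqP ->.
move=> ha hb hk.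
have h0 := hk 0%N isT; rewrite expn0 !divn1 in h0.
have e : a %/ 2 = b %/ 2.
  apply: IH.
  - by rewrite ltn_divLR // -expnSr.
  - by rewrite ltn_divLR // -expnSr.
  move=> k km; rewrite -!divnMA -expnS; exact: hk.
by rewrite -[a]ssrnat.odd_double_half -[b]ssrnat.odd_double_half h0 -!divn2 e.
Qed.

Lemma bit_pow (i k : nat) : odd (2 ^ i %/ 2 ^ k) = (i == k).
Proof.
case: (ltngtP k i) => h.
- rewrite -(subnK (ltnW h)) expnD mulnK ?expn_gt0 //.
  by rewrite oddX /= subn_eq0 leqNgt h.
- by rewrite divn_small // ltn_exp2l.
- by rewrite h divnn expn_gt0.
Qed.

End Bits.

Section ZState.
Variable R : realType.
Local Notation C := R[i].
Variable n : nat.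
Local Notation N := (2 ^ n)%N.
Local Notation Mat := 'M[C]_N.
Local Notation Vec := 'cV[C]_N.

Definition zg (i : 'I_n) : Mat := pauli_string R (fun k => if k == i then PZ else PI).
Definition zs (i : 'I_n) (a : nat) : C := if odd (a %/ 2 ^ i) then -1 else 1.

Lemma zentry i (a b : 'I_N) : zg i a b = if a == b then zs i a else 0.
Proof.
rewrite /zg /zs mxE; case: (eqVneq a b) => [<-|nab].
  rewrite (bigD1 i) //= eqxx big1 ?mulr1.
    by case: (odd _).
  by move=> k /negPf ->; case: (odd _).
have [k kb] : exists k : 'I_n, odd (a %/ 2 ^ k) != odd (b %/ 2 ^ k).
  apply/existsP; apply: contraR nab => /existsPn H; apply/eqP; apply/val_eqP => /=.
  apply/eqP; apply: bits_eq; [exact: ltn_ord | exact: ltn_ord|] => k km.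
  by have := H (Ordinal km); rewrite negbK => /eqP.
rewrite (bigD1 k) //=; move: kb.
by case: (k == i); case: (odd _); case: (odd _); rewrite //= mul0r.
Qed.

Lemma zmul i (v : Vec) (j : 'I_N) : (zg i *m v) j 0 = zs i j * v j 0.
Proof.
rewrite mxE (bigD1 j) //= zentry eqxx big1 ?addr0 // => b nb.
by rewrite zentry eq_sym (negPf nb) mul0r.
Qed.

Lemma zs_sq i a : zs i a * zs i a = 1.
Proof. by rewrite /zs; case: (odd _); rewrite ?mulrNN mulr1. Qed.

Definition z0 : 'I_N := Ordinal (N_gt0 n).
Definition e0 : Vec := bv z0.

Lemma zg_e0 i : zg i *m e0 = e0.
Proof.
apply/matrixP => j k; rewrite ord1 zmul /e0 /bv !mxE.
case: (eqVneq j z0) => [->|nj] /=; last by rewrite mulr0.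
by rewrite /zs /= div0n /= mul1r.
Qed.

Lemma ltn_pow (i : 'I_n) : (2 ^ i < N)%N.
Proof. by rewrite ltn_exp2l. Qed.

Definition bi (i : 'I_n) : Vec := bv (Ordinal (ltn_pow i)).

Lemma zg_bi j i : zg j *m bi i = (if j == i then -1 else 1) *: bi i.
Proof.
apply/matrixP => a k; rewrite ord1 zmul /bi /bv !mxE.
case: (eqVneq a (Ordinal (ltn_pow i))) => [->|na] /=; last by rewrite !mulr0.
rewrite /zs /= bit_pow eq_sym.
exact: erefl.
Qed.

Lemma gen_prod_e0 l : gen_prod zg l *m e0 = e0.
Proof.
elim: l => [|x l IH]; first by rewrite /gen_prod big_nil mul1mx.
by rewrite /gen_prod big_cons -mulmxA -/(gen_prod zg l) IH zg_e0.
Qed.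

Lemma gen_prod_bi i l : all (fun j => j != i) l -> gen_prod zg l *m bi i = bi i.
Proof.
elim: l => [|x l IH]; first by rewrite /gen_prod big_nil mul1mx.
move=> /andP [xi al].
by rewrite /gen_prod big_cons -mulmxA -/(gen_prod zg l) IH // zg_bi (negPf xi) scale1r.
Qed.

Lemma neg_self (v : Vec) : - v = v -> v = 0.
Proof.
move=> h; have : (2%:R : C) *: v = 0 by rewrite scaler_nat mulr2n -{1}h addNr.
by move/eqP; rewrite scaler_eq0 pnatr_eq0 /= => /eqP.
Qed.

Lemma zg_diag i : zg i = diag_mx (\row_a zs i a).
Proof. by apply/matrixP => a b; rewrite zentry !mxE; case: (a == b); rewrite ?mulr1n ?mulr0n. Qed.

Lemma zstab : exists v : Vec, stab_state v /\ dotv v v = 1.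
Proof.
exists e0; split; last first.
  by rewrite /dotv /e0 /bv hadj_delta mul_delta_mx mxE !eqxx.
split; first exact: bv_neq0.
exists zg; split; [split|split].
- by move=> i; exists 0%N, (fun k => if k == i then PZ else PI); rewrite expr0 scale1r.
- by move=> i j; rewrite !zg_diag diag_mx_comm.
- move=> [l E]; have := gen_prod_e0 l; rewrite -E mulNmx mul1mx => /neg_self /eqP.
  by apply/negP; exact: bv_neq0.
- move=> i [l [al E]]; have := gen_prod_bi al; rewrite -E zg_bi eqxx scaleN1r.
  by move=> /neg_self /eqP; apply/negP; exact: bv_neq0.
- exact: zg_e0.
move=> w Hw; exists (w z0 0); apply/matrixP => j k; rewrite ord1 /e0 /bv !mxE.
case: (eqVneq j z0) => [->|nj] /=; first by rewrite mulr1.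
rewrite mulr0.
have [k' kb] : exists k' : 'I_n, odd (j %/ 2 ^ k').
  apply/existsP; apply: contraR nj => /existsPn H; apply/eqP; apply/val_eqP => /=.
  apply/eqP; apply: bits_eq; [exact: ltn_ord | exact: N_gt0|] => k2 km.
  by rewrite div0n /=; apply/negbTE/(H (Ordinal km)).
have := congr1 (fun M : Vec => M j 0) (Hw k'); rewrite /= zmul /zs kb mulN1r.
move=> h; have : (2%:R : C) * w j 0 = 0 by rewrite mulr_natl mulr2n -{1}h addNr.
by move/eqP; rewrite mulf_eq0 pnatr_eq0 /= => /eqP.
Qed.

End ZState.

Lemma list_min (T : eqType) (R : realType) (f : T -> R) (L : seq T) x0 : x0 \in L ->
  exists2 x, x \in L & forall y, y \in L -> f x <= f y.
Proof.
elim: L x0 => [//|a L IH] x0 _.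
case: L IH => [|b L] IH.
  by exists a; rewrite ?mem_head // => y; rewrite mem_seq1 => /eqP ->.
have [x xL Hx] := IH b (mem_head _ _).
case: (lerP (f a) (f x)) => h.
  exists a; first exact: mem_head.
  move=> y; rewrite in_cons => /orP [/eqP ->//|/Hx]; exact: le_trans.
exists x; first by rewrite in_cons xL orbT.
move=> y; rewrite in_cons => /orP [/eqP ->|/Hx //]; exact: ltW.
Qed.

Section Final.
Variable R : realType.
Local Notation C := R[i].
Variable n : nat.
Local Notation N := (2 ^ n)%N.
Local Notation Mat := 'M[C]_N.
Local Notation Vec := 'cV[C]_N.

Lemma hadj_sum m (g : 'I_m -> Mat) : hadj (\sum_(i < m) g i) = \sum_(i < m) hadj (g i).
Proof.
apply/matrixP => a b; rewrite hadjE !summxE rmorph_sum; apply: eq_bigr => i _.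
by rewrite hadjE.
Qed.

Lemma stab_ham_herm (H : Mat) : stab_hamiltonian H -> hadj H = H.
Proof.
move=> [m [g [_ [hg ->]]]]; rewrite hadjN hadj_sum; congr (- _).
by apply: eq_bigr => i _; apply: hg.
Qed.

Lemma Q_herm (H : Mat) w : hadj H = H -> Q H w = (q H w)%:C.
Proof. by move=> hH; have [U [r sd]] := spec_exists hH; apply: Q_real sd w. Qed.

Lemma trQ (H : Mat) (v : Vec) : \tr (H *m (v *m hadj v)) = Q H v.
Proof.
rewrite mulmxA mxtrace_mulC /Q mulmxA /mxtrace big_ord1.
by [].
Qed.

End Final.

Unset Implicit Arguments.
Theorem lemma1 (R : realType) (n : nat) (H0 V : 'M[R[i]]_(2 ^ n))
    (S : 'cV[R[i]]_(2 ^ n)) :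
  stab_hamiltonian H0 ->
  unique_ground_state H0 S ->
  hadj S *m S = 1%:M ->
  (exists Delta : R, 0 < Delta /\ spectral_gap H0 Delta) ->
  is_hermitian V ->
  (1%:M - S *m hadj S) *m V *m S != 0 ->
  exists lambda0 : R, 0 < lambda0 /\
    forall lambda : R, 0 < `|lambda| < lambda0 ->
      (exists psi : 'cV[R[i]]_(2 ^ n),
          unique_ground_state (H0 + lambda%:C *: V) psi /\ ~ stab_state psi) /\
      (exists d : R, is_delta_STAB (H0 + lambda%:C *: V) d /\ 0 < d).
Proof.
move=> hst hug hSS [Delta [D0 [e0 [e1 [He0 He1 e01 Hgap DE]]]]] hV hVS.
have h0 := stab_ham_herm hst.
have SS : dotv S S = 1 by apply/dotv_1.
have hug' := hug.
case: hug' => [[nS [eg [Heg HSg]]] Huniq].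
have ege := Egs_unique Heg He0; rewrite ege in HSg.
have gapb : forall u, dotv S u = 0 -> e1 * nn u <= q H0 u.
  by move=> u Su; apply: (gap_bound h0 He0 Hgap hug Su).
have [K [K0 HK]] := qV_bound hV.
have [c [c0 c1 Hc]] := fid_bound SS.
set l0 := (e1 - e0) * (1 - c) / (2 * (K + 1)).
have K1 : 0 < 2 * (K + 1) by lra.
have dc : 0 < (e1 - e0) * (1 - c) by apply: mulr_gt0; lra.
exists l0; split; first by rewrite divr_gt0.
move=> lam /andP [lp ll].
have Hlam : 2 * (`|lam| * K) < (e1 - e0) * (1 - c).
  have : `|lam| * (2 * (K + 1)) < (e1 - e0) * (1 - c).
    by rewrite -ltr_pdivlMr.
  nra.
set H := H0 + lam%:C *: V.
have hH : hadj H = H by apply: herm_pert.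
have [e He] := herm_Egs hH.
have KEY : forall z, z != 0 -> H *m z = e%:C *: z -> c * nn z < sq (dotv S z).
  by move=> z nz Hz; apply: (key h0 hV HSg SS gapb K0 HK e01 Hlam He nz Hz).
have [psi [npsi Hpsi]] := He.1.
have Kpsi := KEY _ npsi Hpsi.
have apsi : dotv S psi != 0.
  apply/eqP => a0; move: Kpsi; rewrite a0 /sq /= expr0n /= addr0.
  by move=> h; have := mulr_ge0 c0 (nn_ge0 psi); lra.
have UG : unique_ground_state H psi.
  split; first by split => //; exists e.
  move=> w [nw [e' [He' Hw]]]; rewrite (Egs_unique He' He) in Hw.
  set a := dotv S psi; set b := dotv S w.
  set z := a *: w - b *: psi.
  have Hz : H *m z = e%:C *: z.
    rewrite /z mulmxBr -!scalemxAr Hw Hpsi !scalerA scalerBr !scalerA.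
    by rewrite [a * _]mulrC [b * _]mulrC.
  have Sz : dotv S z = 0.
    by rewrite /z dotvDr -scaleN1r !dotvZr /a /b; ring.
  have z0 : z = 0.
    apply/eqP; apply: contraT => nz; have := KEY _ nz Hz.
    rewrite Sz /sq /= expr0n /= addr0 => h; have := mulr_ge0 c0 (nn_ge0 z); lra.
  exists (b / a); apply: (scalerI apsi).
  move/eqP: z0; rewrite subr_eq0 => /eqP ->.
  by rewrite scalerA mulrC divfK.
have NS : ~ stab_state psi.
  move=> sp.
  case: (classic (exists b, psi = b *: S)) => [[b bE]|np]; last first.
    by have := Hc _ sp np; lra.
  have nb : b != 0 by apply: contraNneq npsi => b0; rewrite bE b0 scale0r.
  have HS' : H *m S = e%:C *: S.
    apply: (scalerI nb); rewrite scalemxAr -bE Hpsi bE !scalerA mulrC //.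
  have lam0 : lam != 0 by rewrite -normr_gt0.
  have VS : V *m S = (lam^-1 * (e - e0))%:C *: S.
    move: HS'; rewrite /H mulmxDl HSg -scalemxAl => HS'.
    have E : lam%:C *: (V *m S) = e%:C *: S - e0%:C *: S.
      by rewrite -HS' [e0%:C *: S + _]addrC addrK.
    have lamC : lam%:C != 0 by rewrite (inj_eq (@complexI _)).
    apply: (scalerI lamC); rewrite E scalerA -scalerBl.
    congr (_ *: _); rewrite -!rmorphB -!rmorphM /= mulrA mulfV // mul1r.
    by rewrite rmorphB.
  move/eqP: hVS; apply.
  rewrite -mulmxA VS mulmxBl mul1mx -mulmxA -scalemxAr.
  have -> : hadj S *m S = 1%:M by [].
  by rewrite -scalemxAr mulmx1 subrr.
split; first by exists psi.
have [L [HL1 HL2]] := proj_list R n.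
have [v0 [sv0 v01]] := zstab R n.
have r0L : v0 *m hadj v0 \in L by apply: HL2; exists v0; split => //; split => //; exact: (proj2 (dotv_1 v0) v01).
pose f (rho : 'M[R[i]]_(2 ^ n)) := complex.Re (\tr (H *m rho)).
have fE : forall rho, stab_proj rho -> exists v, [/\ stab_state v, dotv v v = 1,
    rho = v *m hadj v & \tr (H *m rho) = (f rho)%:C /\ f rho = q H v].
  move=> rho [v [sv [v1 ->]]]; exists v; split => //; first by apply/dotv_1.
  by rewrite /f trQ (Q_herm _ hH).
have [rs rsL Hrs] := list_min f r0L.
have [vs [svs vs1 rsE [trs fs]]] := fE _ (HL1 _ rsL).
exists (f rs - e); split; last first.
  have nvs : nn vs = 1 by rewrite /nn vs1.
  have ray := herm_any_spec hH vs He; rewrite nvs mulr1 -fs in ray.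
  rewrite subr_gt0 lt_def ray andbT; apply/eqP => E.
  have Hvs : H *m vs = e%:C *: vs by apply: (herm_eq_spec hH He); rewrite -fs E nvs mulr1.
  have nvs0 : vs != 0 by case: svs.
  have [cc ccE] := UG.2 vs (conj nvs0 (ex_intro _ e (conj He Hvs))).
  have ncc : cc != 0 by apply: contraNneq nvs0 => c0'; rewrite ccE c0' scale0r.
  apply: NS; have := stab_state_scale svs (invr_neq0 ncc).
  by rewrite ccE scalerA mulVf // scale1r.
exists (f rs), e; split => //; split.
  exists rs; split => //.
  exists 1%N, (fun _ => 1), (fun _ => rs); split => //.
  - by rewrite big_ord1.
  - by move=> _; apply: HL1.
  - by rewrite big_ord1 scale1r.
move=> rho [k [p [rhos [p0 p1 sp ->]]]].
rewrite mulmx_sumr raddf_sum /=.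
have -> : \sum_(i < k) \tr (H *m ((p i)%:C *: rhos i)) = (\sum_(i < k) p i * f (rhos i))%:C.
  rewrite rmorph_sum; apply: eq_bigr => i _.
  have [v [_ _ _ [tr1 _]]] := fE _ (sp i).
  by rewrite -scalemxAr mxtraceZ tr1 rmorphM.
rewrite lecR -[f rs]mul1r -p1 mulr_suml; apply: ler_sum => i _.
apply: ler_wpM2l => //; apply: Hrs; apply: HL2; exact: sp.
Qed.
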